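(* For every fixed graph $H$ there is a constant $c_H$, depending only on $H$, such that the following holds. Let $G=(X\cup Y,E)$ be a simple $H$-minor-free bipartite graph with bipartition $(X,Y)$ such that $N(u)\not\subseteq N(v)$ for all distinct $u,v\in Y$. Then $|Y|\le c_H|X|$. *)

(* Defs.v *)
From mathcomp Require Import all_boot.
Set Implicit Arguments. Unset Strict Implicit. Unset Printing Implicit Defensive.

Definition simple_graph (T : finType) (e : rel T) : Prop :=
  symmetric e /\ irreflexive e.

Definition nbhd (T : finType) (e : rel T) (u : T) : {set T} := [set w | e u w].

Definition connected_in (T : finType) (e : rel T) (S : {set T}) : Prop :=
  forall x y, x \in S -> y \in S ->
    connect [rel a b | [&& a \in S, b \in S & e a b]] x y.

Definition is_minor (V : finType) (eH : rel V) (T : finType) (e : rel T) : Prop :=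
  exists phi : V -> {set T},
    [/\ forall v, phi v != set0,
        forall v, connected_in e (phi v),
        forall u v, u != v -> [disjoint phi u & phi v]
      & forall u v, eH u v -> exists x y, [/\ x \in phi u, y \in phi v & e x y]].

Definition minor_free (V : finType) (eH : rel V) (T : finType) (e : rel T) : Prop :=
  ~ is_minor eH e.

Definition bipartition (T : finType) (e : rel T) (X Y : {set T}) : Prop :=
  [/\ X :&: Y = set0, X :|: Y = setT &
      forall x y, e x y -> (x \in X /\ y \in Y) \/ (x \in Y /\ y \in X)].

(* Main.v *)
Require Import Defs.
From mathcomp Require Import all_boot zify.
Set Implicit Arguments. Unset Strict Implicit. Unset Printing Implicit Defensive.

Definition rrel {W : finType} (F : rel W) (B : {set W}) : rel W :=
  [rel a b | [&& a \in B, b \in B & F a b]].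

Definition conn {W : finType} (F : rel W) (B : {set W}) : Prop :=
  forall x y, x \in B -> y \in B -> connect (rrel F B) x y.

Definition model {W : finType} (F : rel W) (S : {set W}) (h : nat)
  (phi : nat -> {set W}) : Prop :=
  (forall i, i < h -> [/\ phi i != set0, phi i \subset S & conn F (phi i)]) /\
  (forall i j, i < h -> j < h -> i != j ->
     [disjoint phi i & phi j] /\ exists x y, [/\ x \in phi i, y \in phi j & F x y]).

Definition nb {W : finType} (F : rel W) (S : {set W}) x := [set y in S | F x y].
Definition E {W : finType} (F : rel W) (S : {set W}) := \sum_(x in S) #|nb F S x|.

Lemma rrel_sym (W : finType) (F : rel W) B : symmetric F -> connect_sym (rrel F B).
Proof.
move=> sF; apply: sym_connect_sym => a b; rewrite /rrel /=.
by rewrite sF; case: (a \in B); case: (b \in B).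
Qed.

Lemma conn_lift (W : finType) (F G : rel W) (B B' : {set W}) :
  (forall a b, a \in B -> b \in B -> F a b -> connect (rrel G B') a b) ->
  forall x y, connect (rrel F B) x y -> connect (rrel G B') x y.
Proof.
move=> H x y; apply: connect_sub => a b /= /and3P[aB bB Fab]; exact: H.
Qed.

Lemma conn_model_mono (W : finType) (F : rel W) (S S' : {set W}) h phi :
  S \subset S' -> model F S h phi -> model F S' h phi.
Proof.
move=> sS [H1 H2]; split=> // i hi; have [? ? ?] := H1 i hi; split=> //.
exact: subset_trans sS.
Qed.

Definition ctr {W : finType} (F : rel W) (v w : W) : rel W :=
  [rel x y | (x != y) && [|| F x y, (x == w) && F v y | (y == w) && F x v]].

Lemma ctr_lift (W : finType) (F : rel W) (S : {set W}) v w h phi :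
  symmetric F -> v \in S -> F v w ->
  model (ctr F v w) (S :\ v) h phi ->
  model F S h (fun i => if w \in phi i then v |: phi i else phi i).
Proof.
move=> sF vS Fvw [H1 H2].
have notv i : i < h -> v \notin phi i.
  move=> hi; have [_ sub _] := H1 i hi; apply/negP => /(subsetP sub).
  by rewrite !inE eqxx.
split.
- move=> i hi; have [ne sub cn] := H1 i hi.
  have subS : phi i \subset S.
    by apply: subset_trans sub _; apply/subsetP => z; rewrite !inE => /andP[].
  case wi: (w \in phi i).
  + split.
    * by apply/set0Pn; exists v; rewrite !inE eqxx.
    * by apply/subsetP => z; rewrite !inE => /orP[/eqP->|/(subsetP subS)].
    * set B := v |: phi i.
      have edge : forall a b, a \in phi i -> b \in phi i -> ctr F v w a b ->
          connect (rrel F B) a b.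
        move=> a b ai bi /= /andP[_ /or3P[Fab|/andP[/eqP aw Fvb]|/andP[/eqP bw Fav]]].
        - by apply: connect1; rewrite /rrel /= !inE ai bi Fab !orbT.
        - apply: (@connect_trans _ _ v); apply: connect1;
            by rewrite /rrel /= !inE ?ai ?bi ?eqxx ?Fvb ?aw ?(sF w v) ?Fvw ?orbT.
        - apply: (@connect_trans _ _ v); apply: connect1;
            by rewrite /rrel /= !inE ?ai ?bi ?eqxx ?bw ?Fvw ?Fav ?orbT.
      have base : forall a b, a \in phi i -> b \in phi i -> connect (rrel F B) a b.
        move=> a b ai bi; exact: (conn_lift edge (cn a b ai bi)).
      have vw : connect (rrel F B) v w.
        by apply: connect1; rewrite /rrel /= !inE eqxx wi Fvw orbT.
      have wv : connect (rrel F B) w v.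
        by rewrite (rrel_sym _ sF).
      move=> x y; rewrite !inE => /orP[/eqP->|xi] /orP[/eqP->|yi].
      -- exact: connect0.
      -- exact: connect_trans vw (base _ _ wi yi).
      -- exact: connect_trans (base _ _ xi wi) wv.
      -- exact: base.
  + split=> //.
    move=> x y xi yi; apply: (conn_lift _ (cn x y xi yi)).
    move=> a b ai bi /= /andP[_ /or3P[Fab|/andP[/eqP aw _]|/andP[/eqP bw _]]].
    * by apply: connect1; rewrite /rrel /= ai bi Fab.
    * by move: ai; rewrite aw wi.
    * by move: bi; rewrite bw wi.
- move=> i j hi hj ij; have [dis [x [y [xi yj Fxy]]]] := H2 i j hi hj ij.
  split.
  + have nvi := notv i hi; have nvj := notv j hj.
    have wij : ~~ ((w \in phi i) && (w \in phi j)).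
      apply/negP => /andP[wi wj]; move/disjoint_setI0: dis => /setP/(_ w).
      by rewrite !inE wi wj.
    rewrite -setI_eq0; apply/eqP/setP => z; rewrite !inE.
    move/disjoint_setI0: dis => /setP/(_ z); rewrite !inE => dz.
    case wi: (w \in phi i); case wj: (w \in phi j); rewrite ?inE //;
      try by move: wij; rewrite wi wj.
    * case: (z =P v) => [->|_]; first by rewrite (negbTE nvj) andbF.
      by rewrite dz.
    * case: (z =P v) => [->|_]; first by rewrite (negbTE nvi).
      by rewrite dz.
  + move: Fxy => /= /andP[_ /or3P[Fxy|/andP[/eqP xw Fvy]|/andP[/eqP yw Fxv]]].
    * exists x, y; split=> //.
      - by case: (w \in phi i); rewrite ?inE xi ?orbT.
      - by case: (w \in phi j); rewrite ?inE yj ?orbT.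
    * exists v, y; split=> //.
      - by rewrite -xw xi !inE eqxx.
      - by case: (w \in phi j); rewrite ?inE yj ?orbT.
    * exists x, v; split=> //.
      - by case: (w \in phi i); rewrite ?inE xi ?orbT.
      - by rewrite -yw yj !inE eqxx.
Qed.

Lemma sum_ind_card (W : finType) (A C : {set W}) : \sum_(x in A) (x \in C : nat) = #|A :&: C|.
Proof.
rewrite -sum1_card big_mkcond /= [RHS]big_mkcond /=.
by apply: eq_bigr => x _; rewrite inE; case: (x \in A); case: (x \in C).
Qed.

Lemma ctr_count (W : finType) (F : rel W) (S : {set W}) v w :
  symmetric F -> irreflexive F -> v \in S -> w \in S -> F v w ->
  E F S <= E (ctr F v w) (S :\ v) + 2 + 2 * #|nb F (nb F S v) w|.
Proof.
move=> sF iF vS wS Fvw.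
have vw : v != w by apply/negP => /eqP e; move: Fvw; rewrite e iF.
set F' := ctr F v w; set S' := S :\ v.
set C := [set x in S | F x v && F x w].
have eC : nb F (nb F S v) w = C.
  by apply/setP => y; rewrite !inE andbA [F y v]sF [F y w]sF andbAC.
rewrite eC.
have wS' : w \in S' by rewrite !inE eq_sym vw.
rewrite /E (big_setD1 v vS) /= (big_setD1 w wS') /= (big_setD1 w wS') /=.
have per : forall x, x \in S' :\ w -> #|nb F S x| <= #|nb F' S' x| + (x \in C).
  move=> x; rewrite !inE => /and3P[xw xv xS].
  have sub : nb F S x :\ v \subset nb F' S' x.
    apply/subsetP => y; rewrite !inE => /and3P[yv yS Fxy].
    rewrite yv yS /F' /ctr /= Fxy ?orbT ?andbT.
    by apply/negP => /eqP e; move: Fxy; rewrite e iF.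
  rewrite (cardsD1 v (nb F S x)) inE vS /=.
  case Fxv: (F x v) => /=; last by rewrite add0n (leq_trans (subset_leq_card sub)) ?leq_addr.
  case Fxw: (F x w) => /=.
    by rewrite xS /= addnC leq_add2r (subset_leq_card sub).
  rewrite andbF addn0 add1n.
  have -> : #|nb F S x :\ v|.+1 = #|w |: (nb F S x :\ v)|.
    by rewrite cardsU1 !inE Fxw !andbF.
  apply: subset_leq_card; apply/subsetP => y; rewrite in_setU1 => /orP[/eqP->|/(subsetP sub)//].
    by rewrite !inE eq_sym vw wS /F' /ctr /= xw eqxx Fxv !orbT.
have sumle : \sum_(x in S' :\ w) #|nb F S x| <= \sum_(x in S' :\ w) #|nb F' S' x| + #|C|.
  apply: (@leq_trans (\sum_(x in S' :\ w) (#|nb F' S' x| + (x \in C)))); first by apply: leq_sum => x; exact: per.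
  rewrite big_split /= sum_ind_card leq_add2l.
  by apply: subset_leq_card; apply: subsetIr.
have wineq : #|nb F S v| + #|nb F S w| <= #|nb F' S' w| + 2 + #|C|.
  set A := nb F S v :\ w; set B := nb F S w :\ v.
  have cv : #|nb F S v| = #|A|.+1 by rewrite (cardsD1 w) !inE wS Fvw.
  have cw : #|nb F S w| = #|B|.+1 by rewrite (cardsD1 v) !inE vS sF Fvw.
  have sU : A :|: B \subset nb F' S' w.
    apply/subsetP => y; rewrite !inE => /orP[/and3P[yw yS Fvy]|/and3P[yv yS Fwy]].
    - have yv : y != v by apply/negP => /eqP e; move: Fvy; rewrite e iF.
      by rewrite yv yS /F' /ctr /= eq_sym yw eqxx Fvy orbT.
    - have yw : w != y by apply/negP => /eqP e; move: Fwy; rewrite e iF.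
      by rewrite yv yS /F' /ctr /= yw Fwy.
  have sI : A :&: B \subset C.
    by apply/subsetP => y; rewrite !inE => /andP[/and3P[_ yS Fvy] /and3P[_ _ Fwy]];
       rewrite yS sF Fvy sF Fwy.
  rewrite cv cw addSn addnS -cardsUI.
  rewrite addnAC addn2 !ltnS; apply: leq_add; exact: subset_leq_card.
move: sumle wineq; lia.
Qed.

Lemma ctr_sym (W : finType) (F : rel W) v w : symmetric F -> symmetric (ctr F v w).
Proof.
move=> sF x y; rewrite /ctr /= eq_sym (sF y x) (sF v x) (sF v y).
by case: (x == w); case: (y == w); case: (F x y); case: (F y v); case: (F x v).
Qed.

Lemma ctr_irr (W : finType) (F : rel W) v w : irreflexive (ctr F v w).
Proof. by move=> x; rewrite /ctr /= eqxx. Qed.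

Lemma model_ext (W : finType) (F : rel W) (S : {set W}) h phi v :
  symmetric F -> irreflexive F -> v \in S -> model F (nb F S v) h phi ->
  model F S h.+1 (fun i => if i == h then [set v] else phi i).
Proof.
move=> sF iF vS [H1 H2].
have subN : nb F S v \subset S by apply/subsetP => z; rewrite inE => /andP[].
have vn j : j < h -> v \notin phi j.
  move=> hj; have [_ sub _] := H1 j hj; apply/negP => /(subsetP sub).
  by rewrite inE iF andbF.
have ed j : j < h -> exists y, y \in phi j /\ F v y.
  move=> hj; have [ne sub _] := H1 j hj; have [y yj] := set0Pn _ ne.
  by exists y; split=> //; move: (subsetP sub y yj); rewrite inE => /andP[].
split.
- move=> i hi; case: (i =P h) => [_|ih].
    split; first by apply/set0Pn; exists v; rewrite inE.
      by rewrite sub1set.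
    by move=> x y; rewrite !inE => /eqP-> /eqP->; apply: connect0.
  have hi' : i < h by move: hi ih; clear; lia.
  have [ne sub cn] := H1 i hi'; split=> //; exact: subset_trans sub subN.
- move=> i j hi hj ij.
  case: (i =P h) => [ih|ih]; case: (j =P h) => [jh|jh].
  + by move: ij; rewrite ih jh eqxx.
  + have hj' : j < h by move: hj jh; clear; lia.
    split; first by rewrite disjoints1 vn.
    by have [y [yj Fvy]] := ed j hj'; exists v, y; rewrite inE eqxx.
  + have hi' : i < h by move: hi ih; clear; lia.
    split; first by rewrite disjoint_sym disjoints1 vn.
    by have [y [yi Fvy]] := ed i hi'; exists y, v; rewrite inE eqxx sF.
  + have hi' : i < h by move: hi ih; clear; lia.
    have hj' : j < h by move: hj jh; clear; lia.
    exact: H2.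
Qed.

Fixpoint gg (h : nat) : nat := if h is h'.+1 then (gg h').*2.+2 else 0.

Lemma sum_pos (W : finType) (S : {set W}) (f : W -> nat) :
  0 < \sum_(x in S) f x -> exists2 x, x \in S & 0 < f x.
Proof.
move=> H; apply/exists_inP; apply: contraLR H; rewrite negb_exists_in => /forall_inP H.
by rewrite -leqNgt leqn0; apply/eqP; apply: big1 => x /H; rewrite lt0n negbK => /eqP.
Qed.

Lemma mader h : forall (W : finType) (F : rel W) (S : {set W}),
  symmetric F -> irreflexive F -> S != set0 -> gg h * #|S| <= E F S ->
  exists phi, model F S h phi.
Proof.
elim: h => [|h IHh] W F S.
  by move=> _ _ _ _; exists (fun _ => set0); split.
suff: forall n (F : rel W) (S : {set W}), #|S| <= n -> symmetric F -> irreflexive F ->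
   S != set0 -> gg h.+1 * #|S| <= E F S -> exists phi, model F S h.+1 phi.
  by move/(_ #|S| F S (leqnn _)).
elim=> [|n IHn] {}F {}S.
  by rewrite leqn0 cards_eq0 => /eqP-> _ _; rewrite eqxx.
move=> Sn sF iF neS dens.
have Spos : 0 < #|S| by rewrite card_gt0.
have Epos : 0 < E F S.
  by apply: leq_trans dens; rewrite muln_gt0 Spos andbT /=.
have [v vS] := sum_pos Epos; rewrite card_gt0 => /set0Pn [w0 wN].
have [w0S Fvw0] : w0 \in S /\ F v w0 by move: wN; rewrite inE => /andP[].
case: (boolP [exists w in nb F S v, gg h.+1 * #|S :\ v| <= E (ctr F v w) (S :\ v)]).
  move=> /exists_inP [w wN' dw].
  have [wS Fvw] : w \in S /\ F v w by move: wN'; rewrite inE => /andP[].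
  have vw : v != w by apply/negP => /eqP e; move: Fvw; rewrite e iF.
  have [phi mphi] : exists phi, model (ctr F v w) (S :\ v) h.+1 phi.
    apply: IHn => //.
    - by move: Sn; rewrite (cardsD1 v S) vS.
    - exact: ctr_sym.
    - exact: ctr_irr.
    - by apply/set0Pn; exists w; rewrite !inE eq_sym vw.
  by eexists; apply: (ctr_lift sF vS Fvw mphi).
rewrite negb_exists_in => /forall_inP Hno.
set N := nb F S v.
have tbig : forall w, w \in N -> gg h < #|nb F N w|.
  move=> w wN'; have := Hno w wN'; rewrite -ltnNge => Hlt.
  have [wS Fvw] : w \in S /\ F v w by move: wN'; rewrite inE => /andP[].
  have := ctr_count sF iF vS wS Fvw.
  have cS : #|S| = #|S :\ v|.+1 by rewrite (cardsD1 v S) vS.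
  move: dens Hlt; rewrite cS mulnS /=.
  rewrite -/N -!mul2n; nia.
have neN : N != set0 by apply/set0Pn; exists w0.
have [phi mphi] : exists phi, model F N h phi.
  apply: IHh => //.
  rewrite /E mulnC -sum_nat_const; apply: leq_sum => w wN'.
  exact: ltnW (tbig w wN').
by eexists; apply: (model_ext sF iF vS mphi).
Qed.

Definition clique {W : finType} (F : rel W) (K : {set W}) :=
  [forall x in K, forall y in K, (x != y) ==> F x y].

Lemma low_deg (W : finType) (F : rel W) (S : {set W}) g :
  E F S < g * #|S| -> exists2 v, v \in S & #|nb F S v| < g.
Proof.
move=> H; apply/exists_inP; apply: contraLR H; rewrite negb_exists_in => /forall_inP H.
rewrite -leqNgt mulnC -sum_nat_const; apply: leq_sum => x /H; by rewrite -leqNgt.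
Qed.

Lemma clique_count (W : finType) (F : rel W) g : forall n (S : {set W}), #|S| <= n ->
  (forall S' : {set W}, S' \subset S -> S' != set0 -> E F S' < g * #|S'|) ->
  #|[set K : {set W} | (K \subset S) && clique F K]| <= 2 ^ g * #|S| + 1.
Proof.
elim=> [|n IHn] S.
  rewrite leqn0 cards_eq0 => /eqP-> _; rewrite cards0 muln0 add0n.
  rewrite (leq_trans (subset_leq_card (_ : _ \subset [set set0]))) ?cards1 //.
  by apply/subsetP => K; rewrite !inE subset0 => /andP[].
move=> Sn H.
case: (S =P set0) => [->|/eqP neS].
  rewrite cards0 muln0 add0n.
  rewrite (leq_trans (subset_leq_card (_ : _ \subset [set set0]))) ?cards1 //.
  by apply/subsetP => K; rewrite !inE subset0 => /andP[].
have [v vS dv] := low_deg (H S (subxx S) neS).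
have IH := IHn (S :\ v).
have cS : #|S| = #|S :\ v|.+1 by rewrite (cardsD1 v S) vS.
have IH' := IH (_ : #|S :\ v| <= n) (fun S' sub ne => H S' (subset_trans sub (subD1set S v)) ne).
have sub : [set K : {set W} | (K \subset S) && clique F K] \subset
    [set K : {set W} | (K \subset S :\ v) && clique F K] :|: powerset (v |: nb F S v).
  apply/subsetP => K; rewrite !inE => /andP[KS cK].
  case vK: (v \in K).
    apply/orP; right; apply/subsetP => y yK; rewrite !inE.
    case: (y =P v) => //= /eqP yv; rewrite (subsetP KS y yK) /=.
    by move/forall_inP: cK => /(_ v vK)/forall_inP/(_ y yK); rewrite eq_sym yv.
  apply/orP; left; rewrite cK andbT; apply/subsetP => y yK; rewrite !inE (subsetP KS y yK) andbT.
  by apply/negP => /eqP e; move: vK; rewrite -e yK.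
rewrite (leq_trans (subset_leq_card sub)) // (leq_trans (leq_card_setU _ _)) //.
have pw : #|powerset (v |: nb F S v)| <= 2 ^ g.
  rewrite card_powerset leq_pexp2l // cardsU1.
  by apply: leq_trans (leq_add (leq_b1 _) (leqnn _)) _; rewrite add1n.
rewrite cS mulnS; move: IH' pw; lia.
Qed.

Definition FF {T : finType} (e : rel T) (f : T -> T) (C : {set T}) : rel T :=
  [rel x x' | (x != x') && [exists y in C, ((f y == x) && e y x') || ((f y == x') && e y x)]].

Lemma FF_sym (T : finType) (e : rel T) f C : symmetric (FF e f C).
Proof.
move=> x x'; rewrite /FF /= eq_sym; congr (_ && _).
by apply: eq_existsb => y; rewrite orbC.
Qed.

Lemma FF_irr (T : finType) (e : rel T) f C : irreflexive (FF e f C).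
Proof. by move=> x; rewrite /FF /= eqxx. Qed.

Lemma clique_mono (W : finType) (F G : rel W) K :
  (forall x y, F x y -> G x y) -> clique F K -> clique G K.
Proof.
move=> FG /forall_inP cK; apply/forall_inP => x xK; apply/forall_inP => y yK.
by apply/implyP => xy; apply: FG; move: (cK x xK) => /forall_inP/(_ y yK)/implyP; apply.
Qed.

Lemma E_strict (W : finType) (F G : rel W) (S : {set W}) u w :
  (forall x y, F x y -> G x y) -> u \in S -> w \in S -> G u w -> ~~ F u w ->
  E F S < E G S.
Proof.
move=> FG uS wS Guw nFuw; rewrite /E (big_setD1 u uS) [X in _ < X](big_setD1 u uS) /=.
rewrite -addSn; apply: leq_add; last first.
  apply: leq_sum => x _; apply: subset_leq_card; apply/subsetP => y.
  by rewrite !inE => /andP[-> /FG ->].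
apply: proper_card; rewrite properE; apply/andP; split.
  by apply/subsetP => y; rewrite !inE => /andP[-> /FG ->].
by apply/subsetPn; exists w; rewrite !inE ?wS ?Guw // (negbTE nFuw).
Qed.

Lemma nb_in_X (T : finType) (e : rel T) (X Y : {set T}) y :
  bipartition e X Y -> y \in Y -> nbhd e y \subset X.
Proof.
move=> [XY _ be] yY; apply/subsetP => x; rewrite inE => /be [[yX _]|[_ //]].
by move/setP: XY => /(_ y); rewrite !inE yX yY.
Qed.

Lemma build (T : finType) (e : rel T) (X Y : {set T}) :
  bipartition e X Y -> forall n (Z : {set T}), #|Z| <= n -> Z \subset Y ->
  exists (f : T -> T) (C : {set T}), [/\ C \subset Z, (forall y, y \in C -> e y (f y)),
     #|C| <= E (FF e f C) X &
     forall y, y \in Z :\: C -> clique (FF e f C) (nbhd e y)].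
Proof.
move=> bip; elim=> [|n IHn] Z.
  rewrite leqn0 cards_eq0 => /eqP-> _; exists id, set0; split=> //.
  - by move=> y; rewrite inE.
  - by rewrite cards0.
  - by move=> y; rewrite !inE.
move=> Zn ZY.
case: (Z =P set0) => [->|/eqP /set0Pn [y0 y0Z]].
  exists id, set0; split=> //.
  - by move=> y; rewrite inE.
  - by rewrite cards0.
  - by move=> y; rewrite !inE.
have Zn' : #|Z :\ y0| <= n by move: Zn; rewrite (cardsD1 y0 Z) y0Z.
have [f [C [CZ fC cC clC]]] := IHn (Z :\ y0) Zn' (subset_trans (subD1set Z y0) ZY).
have y0C : y0 \notin C by apply/negP => /(subsetP CZ); rewrite !inE eqxx.
case cl0: (clique (FF e f C) (nbhd e y0)).
  exists f, C; split=> //.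
  - exact: subset_trans CZ (subD1set Z y0).
  - move=> y; rewrite !inE => /andP[yC yZ]; case: (y =P y0) => [->//|/eqP yy0].
    by apply: clC; rewrite !inE yC yy0.
move: cl0 => /negbT; rewrite /clique negb_forall_in => /exists_inP [u uN].
rewrite negb_forall_in => /exists_inP [w wN].
rewrite negb_imply => /andP[uw nF].
set f' := fun z => if z == y0 then u else f z.
set C' := y0 |: C.
have mono : forall x x', FF e f C x x' -> FF e f' C' x x'.
  move=> x x'; rewrite /FF /= => /andP[-> /exists_inP [y yC H]] /=.
  apply/exists_inP; exists y; first by rewrite in_setU1 yC orbT.
  have -> : f' y = f y.
    by rewrite /f'; case: (y =P y0) => // e0; move: y0C; rewrite -e0 yC.
  exact: H.
have y0Y : y0 \in Y := subsetP ZY y0 y0Z.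
have sN := nb_in_X bip y0Y.
exists f', C'; split.
- by apply/subsetP => y; rewrite in_setU1 => /orP[/eqP->//|/(subsetP CZ)]; rewrite inE => /andP[].
- move=> y; rewrite in_setU1 => /orP[/eqP->|yC].
    by rewrite /f' eqxx; move: uN; rewrite inE.
  rewrite /f'; case: (y =P y0) => [e0|_]; last exact: fC.
  by move: y0C; rewrite -e0 yC.
- rewrite cardsU1 y0C add1n.
  apply: leq_ltn_trans cC _.
  apply: (E_strict mono (subsetP sN u uN) (subsetP sN w wN)) => //.
  rewrite /FF /= uw /=; apply/exists_inP; exists y0; first by rewrite in_setU1 eqxx.
  by rewrite /f' eqxx eqxx /=; move: wN; rewrite inE => ->.
- move=> y; rewrite !inE negb_or => /andP[/andP[yy0 yC] yZ].
  apply: (clique_mono mono); apply: clC; rewrite !inE yC yy0 yZ.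
  done.
Qed.

Lemma FF_lift (T : finType) (e : rel T) (X Y C S : {set T}) f h phi :
  symmetric e -> X :&: Y = set0 -> C \subset Y -> (forall y, y \in C -> e y (f y)) ->
  S \subset X -> model (FF e f C) S h phi ->
  model e setT h (fun i => phi i :|: [set y in C | f y \in phi i]).
Proof.
move=> se XY CY fC SX [H1 H2].
have inX i x : i < h -> x \in phi i -> x \in X.
  move=> hi xi; have [_ sub _] := H1 i hi; exact: subsetP SX x (subsetP sub x xi).
have notC i x : i < h -> x \in phi i -> x \notin C.
  move=> hi xi; apply/negP => xC; move/setP: XY => /(_ x).
  by rewrite !inE (inX i x hi xi) (subsetP CY x xC).
split.
- move=> i hi; have [ne sub cn] := H1 i hi; split.
  + by have [x xi] := set0Pn _ ne; apply/set0Pn; exists x; rewrite inE xi.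
  + exact: subsetT.
  + set B := _ :|: _.
    have base : forall a b, a \in phi i -> b \in phi i -> connect (rrel e B) a b.
      move=> a b ai bi; apply: (conn_lift _ (cn a b ai bi)) => x x' xi x'i.
      rewrite /FF /= => /andP[_ /exists_inP [y yC /orP[/andP[/eqP fy ey]|/andP[/eqP fy ey]]]].
      * have yB : y \in B by rewrite !inE yC fy xi orbT.
        have xB : x \in B by rewrite !inE xi.
        have x'B : x' \in B by rewrite !inE x'i.
        apply: (@connect_trans _ _ y); apply: connect1; rewrite /rrel /= ?xB ?yB ?x'B //=.
        by rewrite se -fy fC.
      * have yB : y \in B by rewrite !inE yC fy x'i orbT.
        have xB : x \in B by rewrite !inE xi.
        have x'B : x' \in B by rewrite !inE x'i.
        apply: (@connect_trans _ _ y); apply: connect1; rewrite /rrel /= ?xB ?yB ?x'B //=.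
          by rewrite se.
        by rewrite -fy fC.
    have hub : forall z, z \in B -> exists2 x, x \in phi i & connect (rrel e B) z x.
      move=> z; rewrite !inE => /orP[zi|/andP[zC fz]].
        by exists z => //; apply: connect0.
      exists (f z) => //; apply: connect1; rewrite /rrel /= fC //.
      by rewrite !inE zC fz !orbT.
    move=> a b aB bB.
    have [xa xai cxa] := hub a aB; have [xb xbi cxb] := hub b bB.
    apply: connect_trans cxa _; apply: connect_trans (base _ _ xai xbi) _.
    by rewrite (rrel_sym _ se).
- move=> i j hi hj ij; have [dis [x [x' [xi x'j Fxx']]]] := H2 i j hi hj ij.
  split.
  + rewrite -setI_eq0; apply/eqP/setP => z; rewrite !inE.
    move/disjoint_setI0: (dis) => /setP/(_ z); rewrite !inE => dz.
    apply/negP => /andP[/orP[zi|/andP[zC fzi]] /orP[zj|/andP[zC' fzj]]].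
    * by move: dz; rewrite zi zj.
    * by move: (notC i z hi zi); rewrite zC'.
    * by move: (notC j z hj zj); rewrite zC.
    * by move/disjoint_setI0: dis => /setP/(_ (f z)); rewrite !inE fzi fzj.
  + move: Fxx'; rewrite /FF /= => /andP[_ /exists_inP [y yC /orP[/andP[/eqP fy ey]|/andP[/eqP fy ey]]]].
    * exists y, x'; split=> //; rewrite !inE ?yC ?fy ?xi ?x'j ?orbT //.
    * exists x, y; split; rewrite ?inE ?yC ?fy ?xi ?x'j ?orbT //.
      by rewrite se.
Qed.

Lemma model_minor (V : finType) (eH : rel V) (T : finType) (e : rel T) (S : {set T}) phi :
  irreflexive eH -> model e S #|V| phi -> is_minor eH e.
Proof.
move=> iH [H1 H2]; exists (fun v => phi (enum_rank v)); split.
- by move=> v; have [] := H1 _ (ltn_ord (enum_rank v)).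
- by move=> v; have [] := H1 _ (ltn_ord (enum_rank v)).
- move=> u v uv; have [] := H2 _ _ (ltn_ord (enum_rank u)) (ltn_ord (enum_rank v)) _ => //.
  by apply: contra uv => /eqP/val_inj/enum_rank_inj ->.
- move=> u v euv.
  have uv : u != v by apply/negP => /eqP e0; move: euv; rewrite e0 iH.
  have [] := H2 _ _ (ltn_ord (enum_rank u)) (ltn_ord (enum_rank v)) _ => //.
  by apply: contra uv => /eqP/val_inj/enum_rank_inj ->.
Qed.

Theorem lemma6p1 :
  forall (V : finType) (eH : rel V), simple_graph eH ->
  exists c : nat,
    forall (T : finType) (e : rel T) (X Y : {set T}),
      simple_graph e ->
      minor_free eH e ->
      bipartition e X Y ->
      (forall u v, u \in Y -> v \in Y -> u != v -> ~~ (nbhd e u \subset nbhd e v)) ->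
      (0 < #|X|)%N ->
      (#|Y| <= c * #|X|)%N.
Proof.
move=> V eH [sH iH].
set g := gg #|V|.
exists (g + 2 ^ g + 1) => T e X Y [se ie] mf bip anti Xpos.
have bip' := bip; case: bip' => [XY _ _].
have [f [C [CY fC cC clC]]] := build bip (leqnn #|Y|) (subxx Y).
have sparse : forall S : {set T}, S \subset X -> S != set0 -> E (FF e f C) S < g * #|S|.
  move=> S SX neS; rewrite ltnNge; apply/negP => dens.
  have [phi mphi] := mader (FF_sym e f C) (FF_irr e f C) neS dens.
  apply: mf; apply: (model_minor iH).
  exact: (FF_lift se XY CY fC SX mphi).
have c1 : #|C| < g * #|X|.
  by apply: leq_ltn_trans cC (sparse X (subxx X) _); rewrite -card_gt0.
have c2 : #|Y :\: C| <= 2 ^ g * #|X| + 1.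
  apply: leq_trans (clique_count (leqnn #|X|) (fun S' sub ne => sparse S' sub ne)).
  rewrite -(@card_in_imset _ _ (nbhd e)).
    apply: subset_leq_card; apply/subsetP => K /imsetP [y yYC ->].
    rewrite inE clC // andbT.
    by apply: (nb_in_X bip); move: yYC; rewrite inE => /andP[].
  move=> u v; rewrite !inE => /andP[_ uY] /andP[_ vY] E0.
  case: (eqVneq u v) => // uv.
  by move: (anti u v uY vY uv); rewrite E0 subxx.
have := cardsID C Y.
have : #|Y :&: C| <= #|C| by apply: subset_leq_card; apply: subsetIr.
move: c1 c2 Xpos; nia.
Qed.
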